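(* Let $\mathbb{C}^{1,n+1}$ be a complex vector space with basis $p_1,e_1,\dots,e_n,q_1$ and pseudo-Hermitian metric $g$ of signature $(1,n+1)$ with $g(p_1,q_1)=1$, $g(e_i,e_j)=\delta_{ij}$ and all other values on basis vectors zero. Let $\tilde E=\mathrm{span}_{\mathbb{C}}\{e_1,\dots,e_n\}$, and let $U(1,n+1)_{\mathbb{C}p_1}$ be the group of $g$-preserving complex linear automorphisms of $\mathbb{C}^{1,n+1}$ preserving the line $\mathbb{C}p_1$. For every $f\in U(1,n+1)_{\mathbb{C}p_1}$ let $\phi_f:\tilde E\to\tilde E$ be the map defined by $w(f(\ell))=\phi_f(w(\ell))$ for every isotropic complex line $\ell\neq\mathbb{C}p_1$ (see context). Let $G\subset U(1,n+1)_{\mathbb{C}p_1}$ be a subgroup that acts weakly irreducibly on $\mathbb{C}^{1,n+1}$, and let $F=\{\phi_f: f\in G\}$. Then: (1) $F$ does not preserve any proper complex affine subspace of $\tilde E$; (2) if $F$ preserves a proper affine subspace $L\subset\tilde E$ that is not complex, then the minimal complex affine subspace of $\tilde E$ containing $L$ is $\tilde E$.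
   Context: Every isotropic complex line $\ell\neq\mathbb{C}p_1$ contains a unique vector of the form $tp_1+w+q_1$ with $t\in\mathbb{C}$, $w\in\tilde E$; set $w(\ell)=w$. Every $w\in\tilde E$ arises this way. Each $f\in U(1,n+1)_{\mathbb{C}p_1}$ maps isotropic lines to isotropic lines and fixes $\mathbb{C}p_1$, and $w(f(\ell))$ depends only on $w(\ell)$, so $\phi_f$ is well defined; it is a similarity transformation of the Hermitian space $\tilde E$ (of the form $w\mapsto\mu Aw+b$ with $\mu\in\mathbb{C}^*$, $A$ unitary, $b\in\tilde E$). (This is the composition of the paper's homomorphism $\Gamma$ to the Heisenberg similarity group with the projection $\pi$ to $\mathrm{Sim}\,\tilde E$.) $G$ acts weakly irreducibly on $\mathbb{C}^{1,n+1}$ if it preserves no proper nonzero complex subspace on which $g$ is nondegenerate. An affine subspace of $\tilde E$ (viewed as real affine space) is called complex if its underlying real vector subspace is invariant under multiplication by $i$. *)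

(* Defs.v *)
From HB Require Import structures.
From mathcomp Require Import all_boot all_order all_algebra.
From mathcomp Require Import complex.
From mathcomp Require Import reals.
Set Implicit Arguments. Unset Strict Implicit. Unset Printing Implicit Defensive.
Import Order.TTheory GRing.Theory Num.Theory.
Local Open Scope ring_scope.

(* The space C^{1,n+1} is 'rV[R[i]]_(1 + n + 1), a row vector
   v = row_mx (row_mx (p-coordinate) (E~-part)) (q-coordinate), i.e. coordinates
   with respect to the basis p_1, e_1, ..., e_n, q_1.
   Linear maps act on the right: f : 'M_(1+n+1), v |-> v *m f. *)

Section Defs.
Variables (R : realType) (n : nat).
Local Notation C := R[i].
Local Notation V := 'rV[C]_(1 + n + 1).
Local Notation E := 'rV[C]_n.

Definition pco (v : V) : C := lsubmx (lsubmx v) 0 0.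
Definition eco (v : V) : E := rsubmx (lsubmx v).
Definition qco (v : V) : C := rsubmx v 0 0.

Definition mkV (t : C) (w : E) (s : C) : V :=
  row_mx (row_mx (const_mx t : 'rV_1) w) (const_mx s : 'rV_1).

Definition p1 : V := mkV 1 0 0.
Definition q1 : V := mkV 0 0 1.

Definition gform (u v : V) : C :=
  pco u * (qco v)^* + qco u * (pco v)^* +
  \sum_(i < n) eco u 0 i * (eco v 0 i)^*.

Definition in_U_Cp1 (f : 'M[C]_(1 + n + 1)) : Prop :=
  [/\ f \in unitmx,
      (forall u v : V, gform (u *m f) (v *m f) = gform u v)
    & (p1 *m f :=: p1)%MS].

Definition subgroup_U (G : 'M[C]_(1 + n + 1) -> Prop) : Prop :=
  [/\ G 1%:M,
      (forall f h, G f -> G h -> G (f *m h)),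
      (forall f, G f -> G (invmx f))
    & (forall f, G f -> in_U_Cp1 f)].

Definition nondeg_on (W : 'M[C]_(1 + n + 1)) : Prop :=
  forall u : V, (u <= W)%MS ->
    (forall v : V, (v <= W)%MS -> gform u v = 0) -> u = 0.

Definition weakly_irreducible (G : 'M[C]_(1 + n + 1) -> Prop) : Prop :=
  forall W : 'M[C]_(1 + n + 1),
    (forall f, G f -> (W *m f <= W)%MS) -> nondeg_on W ->
    \rank W = 0%N \/ \rank W = (1 + n + 1)%N.

(* w(l) for the line spanned by a vector v with qco v <> 0:
   the unique vector of the line of the form t p1 + w + q1 has w = w(l) *)
Definition wline (v : V) : E := (qco v)^-1 *: eco v.

(* the vector -(|w|^2/2) p1 + w + q1: the unique vector of the form
   t p1 + w + q1 lying on an isotropic line *)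
Definition isovec (w : E) : V :=
  mkV (- ((\sum_(i < n) w 0 i * (w 0 i)^*) / 2%:R)) w 1.

(* phi_f (w(l)) = w(f(l)) *)
Definition phi (f : 'M[C]_(1 + n + 1)) (w : E) : E := wline (isovec w *m f).

Definition real_subspace (W : E -> Prop) : Prop :=
  [/\ W 0,
      (forall x y, W x -> W y -> W (x + y))
    & (forall (r : R) x, W x -> W ((r%:C)%C *: x))].

Definition affine_with_dir (L W : E -> Prop) : Prop :=
  real_subspace W /\ exists a : E, forall x, L x <-> exists y, W y /\ x = a + y.

Definition affine_subspace (L : E -> Prop) : Prop :=
  exists W, affine_with_dir L W.

Definition complex_affine_subspace (L : E -> Prop) : Prop :=
  exists W, affine_with_dir L W /\ (forall x, W x -> W ((Complex 0 1 : C) *: x)).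

Definition proper_aff (L : E -> Prop) : Prop := exists x, ~ L x.

Definition preserves (h : E -> E) (L : E -> Prop) : Prop :=
  forall x, L x -> L (h x).

Definition complex_affine_hull (L : E -> Prop) : E -> Prop :=
  fun x => forall A, complex_affine_subspace A -> (forall y, L y -> A y) -> A x.

End Defs.

(* Main.v *)
Require Import Defs.
From mathcomp Require Import all_boot all_order all_algebra.
From mathcomp Require Import complex.
From mathcomp Require Import reals.
From Stdlib Require Import Classical.
From mathcomp Require Import ring.
Set Implicit Arguments. Unset Strict Implicit. Unset Printing Implicit Defensive.
Import Order.TTheory GRing.Theory Num.Theory.
Local Open Scope ring_scope.

Lemma span_pred (K : fieldType) m (P : 'rV[K]_m -> Prop) :
  P 0 -> (forall x y, P x -> P y -> P (x + y)) -> (forall c x, P x -> P (c *: x)) ->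
  exists M : 'M[K]_m, forall v, (v <= M)%MS <-> P v.
Proof.
move=> P0 PD PZ.
have key : forall d, exists M : 'M[K]_m, (forall u, (u <= M)%MS -> P u) /\
   ((forall v, P v -> (v <= M)%MS) \/ (d <= \rank M)%N).
  elim=> [|d [M [HM [Hall|Hd]]]].
  - exists 0; split; last by right.
    by move=> u; rewrite submx0 => /eqP ->.
  - by exists M; split => //; left.
  - case: (classic (forall v, P v -> (v <= M)%MS)) => [Hall|].
      by exists M; split => //; left.
    move=> Hn; have [v Hv'] := not_all_ex_not _ _ Hn; have [Pv Hv] := imply_to_and _ _ Hv'.
    exists (M + v)%MS; split.
      move=> u /sub_addsmxP [[u1 u2] /= ->].
      apply: PD; first by apply: HM; apply: submxMl.
      by have /sub_rVP [c ->] := submxMl u2 v; apply: PZ.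
    right; apply: leq_ltn_trans Hd _.
    have: (M < M + v)%MS.
      rewrite ltmxE addsmxSl /=; apply/negP => Hs.
      by apply: Hv; apply: submx_trans Hs; apply: addsmxSr.
    by rewrite ltmxErank => /andP [].
have [M [HM [Hall|Hd]]] := key m.+1.
  by exists M => v; split; [apply: HM | apply: Hall].
by move: (rank_leq_col M); rewrite leqNgt Hd.
Qed.
Section L.
Variables (R : realType) (n : nat).
Local Notation C := R[i].
Local Notation V := 'rV[C]_(1 + n + 1).
Local Notation E := 'rV[C]_n.

Lemma pco_mkV t w s : pco (mkV t w s : V) = t.
Proof. by rewrite /pco /mkV !row_mxKl mxE. Qed.
Lemma eco_mkV t w s : eco (mkV t w s : V) = w.
Proof. by rewrite /eco /mkV row_mxKl row_mxKr. Qed.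
Lemma qco_mkV t w s : qco (mkV t w s : V) = s.
Proof. by rewrite /qco /mkV row_mxKr mxE. Qed.
Lemma mkV_co (v : V) : v = mkV (pco v) (eco v) (qco v).
Proof.
rewrite /mkV /pco /eco /qco.
have e1 : forall (A : 'M[C]_(1, 1)), const_mx (A 0 0) = A.
  by move=> A; apply/matrixP => i j; rewrite !mxE !ord1.
by rewrite !e1 !hsubmxK.
Qed.
Lemma mkV_add t1 w1 s1 t2 w2 s2 :
  (mkV t1 w1 s1 : V) + mkV t2 w2 s2 = mkV (t1 + t2) (w1 + w2) (s1 + s2).
Proof.
rewrite /mkV !add_row_mx; congr row_mx; [congr row_mx|];
  by apply/matrixP => i j; rewrite !mxE.
Qed.
Lemma mkV_scale c t w s : c *: (mkV t w s : V) = mkV (c * t) (c *: w) (c * s).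
Proof. by rewrite /mkV !scale_row_mx !scalemx_const. Qed.
Lemma mkV_inj t1 w1 s1 t2 w2 s2 : (mkV t1 w1 s1 : V) = mkV t2 w2 s2 ->
  [/\ t1 = t2, w1 = w2 & s1 = s2].
Proof.
move=> e; split.
- by rewrite -(pco_mkV t1 w1 s1) e pco_mkV.
- by rewrite -(eco_mkV t1 w1 s1) e eco_mkV.
- by rewrite -(qco_mkV t1 w1 s1) e qco_mkV.
Qed.
Lemma mkV0 : (mkV 0 0 0 : V) = 0.
Proof. by rewrite -(scale0r (mkV 0 0 0 : V)) mkV_scale !mul0r scale0r. Qed.

Lemma gform_mkV t1 w1 s1 t2 w2 s2 :
  gform (mkV t1 w1 s1 : V) (mkV t2 w2 s2) =
  t1 * s2^* + s1 * t2^* + \sum_(i < n) w1 0 i * (w2 0 i)^*.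
Proof. by rewrite /gform !pco_mkV !qco_mkV !eco_mkV. Qed.

Lemma cj0 (x : C) : x = 0 -> x^* = 0.
Proof. by move=> ->; apply: conjC0. Qed.

Lemma gform_p (v : V) t : gform v (mkV t 0 0) = qco v * t^*.
Proof.
rewrite {1}(mkV_co v) gform_mkV (@conjC0 C) mulr0 add0r big1 ?addr0 // => i _.
by rewrite cj0 ?mulr0 // mxE.
Qed.

Lemma sum_norm0 (y : E) : \sum_(i < n) y 0 i * (y 0 i)^* = 0 -> y = 0.
Proof.
move=> /psumr_eq0P H; apply/matrixP => i j; rewrite ord1 mxE.
have /eqP : y 0 j * (y 0 j)^* = 0 by apply: H => // k _; apply: mul_conjC_ge0.
by rewrite mul_conjC_eq0 => /eqP.
Qed.

Lemma cj1 (x : C) : x = 1 -> x^* = 1.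
Proof. by move=> ->; apply: conjC1. Qed.

Lemma gf1 (v : V) : gform v (mkV 1 0 0) = qco v.
Proof. by rewrite gform_p cj1 ?mulr1. Qed.

Lemma gf2 al (y : E) : gform (mkV al y 0 : V) (mkV 0 y 0) = \sum_(i < n) y 0 i * (y 0 i)^*.
Proof. by rewrite gform_mkV cj0 // mulr0 mul0r !add0r. Qed.

Lemma gf3 al (a : E) : gform (mkV al 0 0 : V) (mkV 0 a 1) = al.
Proof.
rewrite gform_mkV cj1 // mulr1 mul0r addr0 big1 ?addr0 // => i _.
by rewrite mxE mul0r.
Qed.

End L.

Section Core.
Variables (R : realType) (n : nat).
Local Notation C := R[i].
Local Notation V := 'rV[C]_(1 + n + 1).
Local Notation E := 'rV[C]_n.
Local Notation ii := (Complex 0 1 : C).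

Lemma p1_neq0 : (p1 R n) != 0.
Proof.
apply/eqP => h; have := pco_mkV (R:=R) (n:=n) 1 0 0.
by rewrite -/(p1 R n) h /pco !linear0 mxE => /eqP; rewrite eq_sym oner_eq0.
Qed.

Lemma core (G : 'M[C]_(1 + n + 1) -> Prop) (HG : subgroup_U G)
  (HW : weakly_irreducible G) (a : E) (W0 Wc : E -> Prop)
  (Wc0 : Wc 0) (WcD : forall x y, Wc x -> Wc y -> Wc (x + y))
  (WcZ : forall (c : C) x, Wc x -> Wc (c *: x))
  (W0c : forall y, W0 y -> Wc y) (W00 : W0 0)
  (gen : forall y, Wc y -> exists y1 y2, [/\ W0 y1, W0 y2 & y = y1 + ii *: y2])
  (inv : forall f, G f -> forall y, W0 y ->
      exists y', Wc y' /\ phi f (a + y) = a + y') :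
  forall x, Wc (x - a).
Proof.
pose P (u : V) := exists al be y, Wc y /\ u = mkV al (be *: a + y) be.
have P0 : P 0 by exists 0, 0, 0; rewrite scale0r addr0 mkV0.
have PD : forall x y, P x -> P y -> P (x + y).
  move=> x y [al1 [be1 [y1 [H1 ->]]]] [al2 [be2 [y2 [H2 ->]]]].
  exists (al1 + al2), (be1 + be2), (y1 + y2); split; first exact: WcD.
  by rewrite mkV_add scalerDl addrACA.
have PZ : forall c x, P x -> P (c *: x).
  move=> c x [al [be [y [H ->]]]].
  exists (c * al), (c * be), (c *: y); split; first exact: WcZ.
  by rewrite mkV_scale scalerDr scalerA.
have [M HM] := span_pred P0 PD PZ.
have Pp1 : P (p1 R n) by exists 1, 0, 0; rewrite scale0r addr0.
have Pinv : forall f, G f -> forall u, P u -> P (u *m f).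
  move=> f Gf.
  have [_ _ _ HU] := HG; have [Hunit Hg Hp] := HU f Gf.
  move/eqmxP/andP: Hp => [Hp1 _].
  have [lam Hlam] := sub_rVP Hp1.
  have lam0 : lam != 0.
    apply/eqP => l0; move: Hlam; rewrite l0 scale0r => h.
    have : (p1 R n) = (p1 R n) *m f *m invmx f by rewrite -mulmxA mulmxV // mulmx1.
    by rewrite h mul0mx; apply/eqP; apply: p1_neq0.
  have qnz : forall u : V, qco u != 0 -> qco (u *m f) != 0.
    move=> u qu; apply/eqP => q0.
    have := Hg u (p1 R n); rewrite Hlam /p1 gf1 mkV_scale mulr1 mulr0 scaler0 gform_p q0 mul0r.
    by move=> /esym /eqP; rewrite (negbTE qu).
  have Kiso : forall y, W0 y -> P (isovec (a + y) *m f).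
    move=> y Wy; have [y' [Wy' Hphi]] := inv f Gf y Wy.
    set v := isovec (a + y) *m f.
    have qv : qco v != 0 by apply: qnz; rewrite /isovec qco_mkV oner_eq0.
    have Hev : eco v = qco v *: (a + y').
      by rewrite -Hphi /phi /wline -/v scalerA divff // scale1r.
    exists (pco v), (qco v), (qco v *: y'); split; first exact: WcZ.
    by rewrite {1}(mkV_co v) Hev scalerDr.
  have Kp : P ((p1 R n) *m f).
    by rewrite Hlam; apply: PZ.
  move=> u [al [be [y [Wy ->]]]].
  have [y1 [y2 [W1 W2 ey]]] := gen y Wy.
  pose nr (w : E) := - ((\sum_(i < n) w 0 i * (w 0 i)^*) / 2%:R).
  pose ga := al - (nr (a + y1) + ii * nr (a + y2) + (be - 1 - ii) * nr (a + 0)).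
  have -> : (mkV al (be *: a + y) be : V) = ga *: (p1 R n) + isovec (a + y1) +
      ii *: isovec (a + y2) + (be - 1 - ii) *: isovec (a + 0).
    rewrite /isovec /(p1 R n) -/(nr _) -/(nr _) -/(nr _) !mkV_scale !mkV_add.
    congr mkV.
    - by rewrite /ga; ring.
    - by rewrite ey; apply/matrixP => i j; rewrite !mxE; ring.
    - by ring.
  rewrite !mulmxDl -!scalemxAl.
  apply: (PD); [apply: (PD); [apply: (PD)|]|].
  - exact: PZ.
  - exact: Kiso.
  - by apply: (PZ); apply: Kiso.
  - by apply: (PZ); apply: Kiso.
have Minv : forall f, G f -> (M *m f <= M)%MS.
  move=> f Gf; apply/row_subP => i; rewrite row_mul.
  apply/HM; apply: Pinv => //; apply/HM; exact: row_sub.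
have Mnd : nondeg_on M.
  move=> u /HM [al [be [y [Wy ->]]]] H.
  have : gform (mkV al (be *: a + y) be : V) (mkV 1 0 0) = 0.
    by apply: H; apply/HM.
  rewrite gf1 qco_mkV => be0; rewrite be0 scale0r add0r in H *.
  have : gform (mkV al y 0 : V) (mkV 0 y 0) = 0.
    apply: H; apply/HM; exists 0, 0, y; split => //; by rewrite scale0r add0r.
  rewrite gf2 => /sum_norm0 y0; rewrite y0 in H *.
  have : gform (mkV al 0 0 : V) (mkV 0 a 1) = 0.
    apply: H; apply/HM; exists 0, 1, 0; split => //; by rewrite scale1r addr0.
  by rewrite gf3 => ->; rewrite mkV0.
case: (HW M Minv Mnd) => [/eqP|] rk.
  move: rk; rewrite mxrank_eq0 => /eqP M0.
  have /HM : P (p1 R n) := Pp1.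
  by rewrite M0 submx0 (negbTE p1_neq0).
move=> x.
have : ((mkV 0 x 1 : V) <= M)%MS.
  by apply: submx_full; rewrite /row_full rk.
move=> /HM [al [be [y [Wy /mkV_inj [_ ex eb]]]]].
by rewrite ex -eb scale1r addrC addKr.
Qed.

End Core.

Section Main.
Variables (R : realType) (n : nat).
Local Notation C := R[i].
Local Notation E := 'rV[C]_n.
Local Notation ii := (Complex 0 1 : C).

Lemma iiM : ii * ii = -1.
Proof. by apply/eqP; rewrite eq_complex /= !mulr0 !mul0r mulr1 sub0r addr0 oppr0 !eqxx. Qed.

Lemma cdec (c : C) : exists r s : R, c = ((r%:C)%C + (s%:C)%C * ii).
Proof.
case: c => r s; exists r, s; apply/eqP; rewrite eq_complex /=.
by apply/andP; split; apply/eqP; ring.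
Qed.

Lemma rN1 : (((-1 : R))%:C)%C = -1 :> C.
Proof. by apply/eqP; rewrite eq_complex /= oppr0 !eqxx. Qed.

Lemma rsub_neg (W : E -> Prop) : real_subspace W -> forall x, W x -> W (- x).
Proof. by move=> [_ _ WZ] x Wx; rewrite -scaleN1r -rN1; apply: WZ. Qed.

Lemma rsub_cplx (W : E -> Prop) : real_subspace W ->
  (forall x, W x -> W (ii *: x)) -> forall (c : C) x, W x -> W (c *: x).
Proof.
move=> [W0 WD WZ] Wi c x Wx.
have [r [s ->]] := cdec c.
rewrite scalerDl -scalerA; apply: WD; apply: WZ => //; exact: Wi.
Qed.

End Main.

Theorem theorem2p5p1 (R : realType) (n : nat)
  (G : 'M[R[i]]_(1 + n + 1) -> Prop) :
  subgroup_U G -> weakly_irreducible G ->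
  (forall L : 'rV[R[i]]_n -> Prop,
     complex_affine_subspace L -> proper_aff L ->
     ~ (forall f, G f -> preserves (phi f) L)) /\
  (forall L : 'rV[R[i]]_n -> Prop,
     affine_subspace L -> proper_aff L -> ~ complex_affine_subspace L ->
     (forall f, G f -> preserves (phi f) L) ->
     forall x, complex_affine_hull L x).
Proof.
move=> HG HW; split.
  move=> L [W [[HWs [a HL]] Wi]] [x nx] Hpres.
  have HWs' := HWs; case: HWs' => [W0 WD WZ].
  have Wc := rsub_cplx HWs Wi.
  have key := @core R n G HG HW a W W W0 WD Wc (fun y h => h) W0.
  have Wxa : W (x - a).
    apply: key.
  - move=> y Wy; exists y, 0; split => //; by rewrite scaler0 addr0.
  - move=> f Gf y Wy.
    have : L (a + y) by apply/HL; exists y.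
    move=> /(Hpres f Gf) /HL [y' [Wy' e]]; exists y'; split => //.
  apply: nx; apply/HL; exists (x - a); split => //.
  by rewrite addrC subrK.
move=> L [W [HWs [a HL]]] _ _ Hpres x.
have HWs' := HWs; case: HWs' => [W0 WD WZ].
pose Wc (y : 'rV[R[i]]_n) := exists y1 y2, [/\ W y1, W y2 & y = y1 + (Complex 0 1 : R[i]) *: y2].
have WcW : forall y, W y -> Wc y.
  by move=> y Wy; exists y, 0; split => //; rewrite scaler0 addr0.
have Wc0 : Wc 0 by apply: WcW.
have WcD : forall x y, Wc x -> Wc y -> Wc (x + y).
  move=> x1 x2 [y1 [y2 [H1 H2 ->]]] [z1 [z2 [K1 K2 ->]]].
  exists (y1 + z1), (y2 + z2); split; try exact: WD.
  by rewrite scalerDr addrACA.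
have WcR : forall r x, Wc x -> Wc ((r%:C)%C *: x).
  move=> r x1 [y1 [y2 [H1 H2 ->]]].
  exists ((r%:C)%C *: y1), ((r%:C)%C *: y2); split; try exact: WZ.
  by rewrite scalerDr !scalerA mulrC.
have Wci : forall x, Wc x -> Wc ((Complex 0 1 : R[i]) *: x).
  move=> x1 [y1 [y2 [H1 H2 ->]]].
  exists (- y2), y1; split => //; first exact: rsub_neg.
  by rewrite scalerDr scalerA iiM scaleN1r addrC.
have WcZ : forall (c : R[i]) x, Wc x -> Wc (c *: x).
  move=> c x1 Wx; have [r [s ->]] := cdec c; rewrite scalerDl -scalerA; apply: WcD; apply: WcR => //.
  exact: Wci.
have key := @core R n G HG HW a W Wc Wc0 WcD WcZ WcW W0.
have Wxa : Wc (x - a).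
  apply: key.
  - by move=> y [y1 [y2 [H1 H2 ->]]]; exists y1, y2.
  - move=> f Gf y Wy.
    have : L (a + y) by apply/HL; exists y.
    move=> /(Hpres f Gf) /HL [y' [Wy' e]]; exists y'; split => //; exact: WcW.
move=> A [W' [[HW's [b HA]] W'i]] HLA.
have HW's' := HW's; case: HW's' => [W'0 W'D W'Z].
have La : L a by apply/HL; exists 0; split => //; rewrite addr0.
have [y0 [Wy0 ea]] := (HA a).1 (HLA a La).
have WW' : forall y, W y -> W' y.
  move=> y Wy.
  have : L (a + y) by apply/HL; exists y.
  move=> /HLA /HA [y' [Wy' e]].
  have -> : y = y' + - y0.
    by apply: (addrI a); rewrite e ea addrACA subrr addr0.
  by apply: (W'D) => //; apply: rsub_neg.
apply/HA; exists (y0 + (x - a)); split.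
  apply: (W'D) => //.
  case: Wxa => [y1 [y2 [H1 H2 ->]]].
  apply: (W'D); first exact: (WW').
  by apply: (W'i); apply: (WW').
by rewrite addrA -ea addrC subrK.
Qed.
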